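(* Let $k\ge4$ be an integer and $\eta\in[\eta_{k+1},\eta_k)$. Then $\angle z_{k-1}z_kw_1,\ \angle z_kw_1w_2,\ \angle w_{k-1}w_kb_0,\ \angle w_kb_0z_0\in(0,\pi)$.
   Context: For $\eta\in(0,\pi/3)$ let $a=\frac{e^{-i\eta}}{2\cos\eta}$, $c=\frac{1}{1-|a|^4}$, and for integers $j\ge0$ put $z_j=ca^{j+1}$, $w_j=1-c|a|^2a^j$, $b_0=a+c|a|^4$. For $u,v,w\in\mathbb{C}$, $\angle uvw=\arg\frac{w-v}{u-v}$ with $\arg$ taking values in $[0,2\pi)$. For integers $k\ge1$ let $\Phi_k(\eta)=(1-|a|^4)\sin((k-1)\eta)-|a|^3\sin((k-2)\eta)+|a|^k\sin\eta$; for each $k\ge4$, $\Phi_k$ has a unique zero in $(\pi/k,\pi/(k-1))$, denoted $\eta_k$. *)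

(* Defs.v *)
From Stdlib Require Import Reals.
From Coquelicot Require Import Coquelicot.
Open Scope R_scope.

(* Principal argument with values in [0, 2*PI): for z <> 0 this is the unique
   theta in [0, 2 PI) with z = |z| (cos theta + i sin theta).
   (Value at 0 is irrelevant/unspecified; we set 0.) *)
Definition arg (z : C) : R :=
  if Ceq_dec z (RtoC 0) then 0
  else if Rle_dec 0 (Im z) then acos (Re z / Cmod z)
       else 2 * PI - acos (Re z / Cmod z).

Definition angle (u v w : C) : R := arg ((w - v) / (u - v))%C.

Definition a_ (eta : R) : C :=
  ((RtoC (cos eta) - Ci * RtoC (sin eta)) / RtoC (2 * cos eta))%C.

Definition c_ (eta : R) : R := 1 / (1 - (Cmod (a_ eta)) ^ 4).

Definition z_ (eta : R) (j : nat) : C := (RtoC (c_ eta) * Cpow (a_ eta) (j + 1))%C.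

Definition w_ (eta : R) (j : nat) : C :=
  (1 - RtoC (c_ eta * (Cmod (a_ eta)) ^ 2) * Cpow (a_ eta) j)%C.

Definition b0 (eta : R) : C := (a_ eta + RtoC (c_ eta * (Cmod (a_ eta)) ^ 4))%C.

Definition Phi (k : nat) (eta : R) : R :=
  let m := Cmod (a_ eta) in
  (1 - m ^ 4) * sin ((INR k - 1) * eta) - m ^ 3 * sin ((INR k - 2) * eta)
  + m ^ k * sin eta.

(* eta_k: the (unique, by the paper) zero of Phi_k in (PI/k, PI/(k-1)). *)
Definition is_eta_k (k : nat) (e : R) : Prop :=
  PI / INR k < e < PI / (INR k - 1) /\ Phi k e = 0.

(* Main.v *)
Require Import Defs.
From Stdlib Require Import Reals Lra Lia Psatz.
From Coquelicot Require Import Coquelicot.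
Open Scope R_scope.

Lemma Im_RtoC_mult (r : R) (z : C) : Im (RtoC r * z)%C = r * Im z.
Proof. destruct z; simpl; ring. Qed.
Lemma Im_minus (z w : C) : Im (z - w)%C = Im z - Im w.
Proof. destruct z, w; simpl; ring. Qed.
Lemma Im_plus (z w : C) : Im (z + w)%C = Im z + Im w.
Proof. destruct z, w; simpl; ring. Qed.
Lemma Im_RtoC (r : R) : Im (RtoC r) = 0.
Proof. reflexivity. Qed.

Lemma arg_pos (z : C) : 0 < Im z -> 0 < arg z < PI.
Proof.
  intros H. unfold arg.
  destruct (Ceq_dec z (RtoC 0)) as [E|E].
  { subst z. simpl in H. lra. }
  destruct (Rle_dec 0 (Im z)) as [_|N]; [|lra].
  apply acos_bound_lt.
  assert (Hm : 0 < Cmod z) by (apply Cmod_gt_0; exact E).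
  assert (H2 := Cmod2_alt z).
  assert (Hlt : Re z ^ 2 < Cmod z ^ 2) by nra.
  assert (Habs1 : Re z < Cmod z) by nra.
  assert (Habs2 : - Cmod z < Re z) by nra.
  split.
  - apply Rmult_lt_reg_r with (Cmod z); [lra|].
    unfold Rdiv; rewrite Rmult_assoc, Rinv_l by lra.
    lra.
  - apply Rmult_lt_reg_r with (Cmod z); [lra|].
    unfold Rdiv; rewrite Rmult_assoc, Rinv_l by lra.
    lra.
Qed.

Lemma angle_pos (u v w : C) :
  0 < Im ((w - v) * Cconj (u - v))%C -> 0 < angle u v w < PI.
Proof.
  intros H. unfold angle. apply arg_pos.
  destruct u as [u1 u2], v as [v1 v2], w as [w1 w2].
  unfold Cconj, Cminus, Cplus, Copp, Cmult, Cdiv, Cinv in *. simpl in *.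
  set (p1 := u1 + - v1) in *. set (p2 := u2 + - v2) in *.
  set (q1 := w1 + - v1) in *. set (q2 := w2 + - v2) in *.
  assert (HD : 0 < p1 * (p1 * 1) + p2 * (p2 * 1)).
  { destruct (Req_dec p1 0) as [E|E]; [|nra].
    rewrite E in H |- *. destruct (Req_dec p2 0) as [E2|E2]; [|nra].
    rewrite E2 in H. lra. }
  set (D := p1 * (p1 * 1) + p2 * (p2 * 1)) in *.
  replace (q1 * (- p2 / D) + q2 * (p1 / D)) with ((q1 * - p2 + q2 * p1) * / D)
    by (unfold Rdiv; ring).
  apply Rmult_lt_0_compat; [lra|]. apply Rinv_0_lt_compat; lra.
Qed.

Section Coords.
Variable x : R.
Hypothesis Hc : 0 < cos x.
Let r := / (2 * cos x).

Lemma a_eq : a_ x = (r * cos x, - (r * sin x)).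
Proof.
  unfold a_, r. unfold Cdiv, Cinv, Cmult, Cminus, Cplus, Copp, RtoC, Ci. simpl.
  apply injective_projections; simpl; field; lra.
Qed.

Lemma r_pos : 0 < r.
Proof. unfold r. apply Rinv_0_lt_compat. lra. Qed.

Lemma Cmod_a : Cmod (a_ x) = r.
Proof.
  rewrite a_eq. unfold Cmod. simpl.
  replace (r * cos x * (r * cos x * 1) + - (r * sin x) * (- (r * sin x) * 1))
    with (r * r) by (pose proof (sin2_cos2 x); unfold Rsqr in *; nra).
  apply sqrt_square. pose proof r_pos. lra.
Qed.

Lemma conj_a : Cconj (a_ x) = (1 - a_ x)%C.
Proof.
  rewrite a_eq. unfold Cconj, Cminus, Cplus, Copp, RtoC. simpl.
  apply injective_projections; simpl; unfold r; field; lra.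
Qed.

Lemma ab_eq : (a_ x * (1 - a_ x))%C = RtoC (r ^ 2).
Proof.
  rewrite <- conj_a, <- Cmod2_conj, Cmod_a. reflexivity.
Qed.

Lemma pow_b (n : nat) :
  Cpow (1 - a_ x)%C n = (r ^ n * cos (INR n * x), r ^ n * sin (INR n * x)).
Proof.
  induction n as [|n IH].
  - simpl. rewrite Rmult_0_l, cos_0, sin_0. apply injective_projections; simpl; ring.
  - rewrite Cpow_S, IH, <- conj_a, a_eq.
    rewrite S_INR, Rmult_plus_distr_r, Rmult_1_l, cos_plus, sin_plus.
    unfold Cconj, Cmult. simpl.
    apply injective_projections; simpl; ring.
Qed.

Lemma pow_a (n : nat) :
  Cpow (a_ x) n = (r ^ n * cos (INR n * x), - (r ^ n * sin (INR n * x))).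
Proof.
  induction n as [|n IH].
  - simpl. rewrite Rmult_0_l, cos_0, sin_0. apply injective_projections; simpl; ring.
  - rewrite Cpow_S, IH, a_eq.
    rewrite S_INR, Rmult_plus_distr_r, Rmult_1_l, cos_plus, sin_plus.
    unfold Cmult. simpl.
    apply injective_projections; simpl; ring.
Qed.

Lemma Im_pow_b (n : nat) : Im (Cpow (1 - a_ x)%C n) = r ^ n * sin (INR n * x).
Proof. rewrite pow_b. reflexivity. Qed.
Lemma Im_pow_a (n : nat) : Im (Cpow (a_ x) n) = - (r ^ n * sin (INR n * x)).
Proof. rewrite pow_a. reflexivity. Qed.

End Coords.

Ltac prep Hs := rewrite ?Cpow_add_r; repeat (rewrite ?RtoC_mult, ?RtoC_pow); rewrite ?Hs, ?Cpow_mult_l.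

Lemma id1 (a : C) (c s : R) (n : nat) : RtoC s = (a * (1 - a))%C ->
  (((1 - RtoC (c * s) * Cpow a 1) - RtoC c * Cpow a (5 + n)) *
   (RtoC c * Cpow (1 - a) (4 + n) - RtoC c * Cpow (1 - a) (5 + n)))%C
  = (RtoC (c * s) * Cpow (1 - a) (3 + n) - RtoC (c ^ 2 * s ^ 3) * Cpow (1 - a) (2 + n)
     - RtoC (c ^ 2 * s ^ 4 * s ^ n) * Cpow a 2)%C.
Proof. intros Hs. prep Hs. ring. Qed.

Lemma id2 (a : C) (c s : R) (n : nat) : RtoC s = (a * (1 - a))%C ->
  (((1 - RtoC (c * s) * Cpow a 2) - (1 - RtoC (c * s) * Cpow a 1)) *
   (RtoC c * Cpow (1 - a) (5 + n) - (1 - RtoC (c * s) * Cpow (1 - a) 1)))%C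
  = (RtoC (c ^ 2 * s ^ 2) * Cpow (1 - a) (5 + n) - RtoC (c * s ^ 2)
     + RtoC (c ^ 2 * s ^ 3) * Cpow (1 - a) 1)%C.
Proof. intros Hs. prep Hs. ring. Qed.

Lemma id3 (a : C) (c s : R) (n : nat) : RtoC s = (a * (1 - a))%C ->
  (((a + RtoC (c * s ^ 2)) - (1 - RtoC (c * s) * Cpow a (4 + n))) *
   ((1 - RtoC (c * s) * Cpow (1 - a) (3 + n)) - (1 - RtoC (c * s) * Cpow (1 - a) (4 + n))))%C
  = (RtoC (c * s ^ 2) * Cpow (1 - a) (3 + n) - RtoC (c ^ 2 * s ^ 4) * Cpow (1 - a) (2 + n)
     - RtoC (c ^ 2 * s ^ 5 * s ^ n) * Cpow a 2)%C.
Proof. intros Hs. prep Hs. ring. Qed.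

Lemma id4 (a : C) (c s : R) (n : nat) : RtoC s = (a * (1 - a))%C ->
  (((RtoC (c * s ^ 2) + 1) * Cpow a 1 - (a + RtoC (c * s ^ 2))) *
   ((1 - RtoC (c * s) * Cpow (1 - a) (4 + n)) - ((1 - a) + RtoC (c * s ^ 2))))%C
  = (- RtoC (c * s ^ 3) + RtoC (c ^ 2 * s ^ 3) * Cpow (1 - a) (5 + n)
     + RtoC (c ^ 2 * s ^ 4) * Cpow (1 - a) 1)%C.
Proof. intros Hs. prep Hs. ring. Qed.

Lemma Cconj_RtoC (r : R) : Cconj (RtoC r) = RtoC r.
Proof. unfold Cconj, RtoC; simpl. apply injective_projections; simpl; ring. Qed.
Lemma Cconj_1 : Cconj 1 = 1.
Proof. apply Cconj_RtoC. Qed.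
Lemma Im_opp (z : C) : Im (- z)%C = - Im z.
Proof. destruct z; reflexivity. Qed.

Lemma sin_le_id x : 0 <= x <= PI -> sin x <= x.
Proof.
  intros H. destruct (sin_bound x 0 (proj1 H) (proj2 H)) as [_ H2].
  unfold sin_approx in H2. cbn [sum_f_R0 Nat.mul Nat.add] in H2. unfold sin_term in H2.
  replace (INR (Factorial.fact (2 * 2 + 1))) with 120 in H2 by (rewrite INR_IZR_INZ; reflexivity).
  replace (INR (Factorial.fact (2 * 1 + 1))) with 6 in H2 by (rewrite INR_IZR_INZ; reflexivity).
  replace (INR (Factorial.fact (2 * 0 + 1))) with 1 in H2 by (rewrite INR_IZR_INZ; reflexivity).
  assert (PI <= 4) by apply PI_4.
  cbn [pow Nat.mul Nat.add] in H2.
  assert (x*x <= 16) by nra.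
  assert (0 <= x*x*x*(20 - x*x)) by (apply Rmult_le_pos; [apply Rmult_le_pos; [nra|lra]|lra]).
  unfold Rdiv in H2. rewrite ?Rinv_1 in H2. lra.
Qed.
Definition PP (m : nat) (x : R) : R :=
  (1 - (/ (2 * cos x)) ^ 4) * sin ((INR m + 5) * x)
  + (1 - (/ (2 * cos x)) ^ 2 - (/ (2 * cos x)) ^ 4) * sin ((INR m + 3) * x)
  + (/ (2 * cos x)) ^ (4 + m) * sin x.

Definition dPP (m : nat) (x : R) : R :=
  let r := / (2 * cos x) in
  let r' := 2 * r ^ 2 * sin x in
  - 4 * r ^ 3 * r' * sin ((INR m + 5) * x)
  + (1 - r ^ 4) * (INR m + 5) * cos ((INR m + 5) * x)
  - (2 * r * r' + 4 * r ^ 3 * r') * sin ((INR m + 3) * x)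
  + (1 - r ^ 2 - r ^ 4) * (INR m + 3) * cos ((INR m + 3) * x)
  + (INR m + 4) * r ^ (3 + m) * r' * sin x
  + r ^ (4 + m) * cos x.

Lemma PP_deriv (m : nat) (x : R) : 0 < cos x -> is_derive (PP m) x (dPP m x).
Proof.
  intros Hc. unfold PP, dPP. auto_derive.
  - repeat split; lra.
  - change (match m with 0%nat => 1 | S _ => INR m + 1 end) with (INR (S m)).
    rewrite S_INR, !pow_add. set (q := (/ (2 * cos x)) ^ m). field. lra.
Qed.

Lemma cos_sq_ge (x : R) : 0 <= x <= PI / 4 -> 1 / 2 <= cos x * cos x.
Proof.
  intros H. pose proof PI_RGT_0.
  assert (Hc : cos (PI / 4) <= cos x) by (apply cos_decr_1; lra).
  rewrite cos_PI4 in Hc.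
  assert (Hs : 0 < sqrt 2) by (apply sqrt_lt_R0; lra).
  assert (Hss : sqrt 2 * sqrt 2 = 2) by (apply sqrt_sqrt; lra).
  assert (H1 : 1 / sqrt 2 * (1 / sqrt 2) = 1 / 2) by (replace (1 / sqrt 2 * (1 / sqrt 2)) with (1 / (sqrt 2 * sqrt 2)) by (field; lra); rewrite Hss; reflexivity).
  assert (0 < 1 / sqrt 2) by (apply Rdiv_lt_0_compat; lra).
  nra.
Qed.

Lemma PP_pos_left (m : nat) (x : R) : 0 < x -> x <= PI / (INR m + 5) -> 0 < PP m x.
Proof.
  intros H0 H1. pose proof PI_RGT_0. pose proof (pos_INR m).
  assert (HK : (INR m + 5) * x <= PI).
  { apply Rmult_le_reg_r with (/ (INR m + 5)).
    - apply Rinv_0_lt_compat; lra.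
    - replace ((INR m + 5) * x * / (INR m + 5)) with x by (field; lra). exact H1. }
  assert (Hx4 : x <= PI / 4) by nra.
  assert (Hcc := cos_sq_ge x (conj (Rlt_le _ _ H0) Hx4)).
  assert (Hc : 0 < cos x) by (apply cos_gt_0; lra).
  set (r := / (2 * cos x)).
  assert (Hr : 0 < r) by (unfold r; apply Rinv_0_lt_compat; lra).
  assert (Hr2 : r * r <= 1 / 2).
  { unfold r. rewrite <- Rinv_mult. apply Rmult_le_reg_r with (2 * cos x * (2 * cos x)); [nra|].
    rewrite Rinv_l by nra. nra. }
  unfold PP. fold r.
  assert (S1 : 0 <= sin ((INR m + 5) * x)) by (apply sin_ge_0; nra).
  assert (S2 : 0 <= sin ((INR m + 3) * x)) by (apply sin_ge_0; nra).
  assert (S3 : 0 < sin x) by (apply sin_gt_0; lra).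
  assert (P4 : 0 < r ^ (4 + m)) by (apply pow_lt; lra).
  assert (A1 : 0 <= 1 - r ^ 4) by (simpl; nra).
  assert (A2 : 0 <= 1 - r ^ 2 - r ^ 4) by (simpl; nra).
  assert (0 <= (1 - r ^ 4) * sin ((INR m + 5) * x)) by (apply Rmult_le_pos; lra).
  assert (0 <= (1 - r ^ 2 - r ^ 4) * sin ((INR m + 3) * x)) by (apply Rmult_le_pos; lra).
  assert (0 < r ^ (4 + m) * sin x) by (apply Rmult_lt_0_compat; lra).
  lra.
Qed.

Lemma pow_le1 (r : R) (m : nat) : 0 <= r <= 1 -> r ^ m <= 1.
Proof.
  intros H. induction m as [|m IH]; simpl; [lra|].
  assert (0 <= r ^ m) by (apply pow_le; lra). nra.
Qed.

Lemma dPP_neg (m : nat) (x : R) :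
  PI / (INR m + 5) < x -> x < PI / (INR m + 4) -> dPP m x < 0.
Proof.
  intros H1 H2. pose proof PI_RGT_0 as Hpi. pose proof PI_4 as Hpi4. pose proof (pos_INR m) as Hm.
  assert (HK1 : PI < (INR m + 5) * x).
  { apply Rmult_lt_reg_r with (/ (INR m + 5)); [apply Rinv_0_lt_compat; lra|].
    replace ((INR m + 5) * x * / (INR m + 5)) with x by (field; lra). exact H1. }
  assert (HK2 : (INR m + 4) * x < PI).
  { apply Rmult_lt_reg_r with (/ (INR m + 4)); [apply Rinv_0_lt_compat; lra|].
    replace ((INR m + 4) * x * / (INR m + 4)) with x by (field; lra). exact H2. }
  assert (Hx0 : 0 < x) by nra.
  assert (Hx4 : x < PI / 4) by nra.
  set (u := (INR m + 5) * x - PI).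
  assert (Hu : 0 < u < x) by (unfold u; nra).
  assert (HSK : sin ((INR m + 5) * x) = - sin u).
  { replace ((INR m + 5) * x) with (u + PI) by (unfold u; ring). apply neg_sin. }
  assert (HCK : cos ((INR m + 5) * x) = - cos u).
  { replace ((INR m + 5) * x) with (u + PI) by (unfold u; ring). apply neg_cos. }
  assert (Hsu : sin u < sin x) by (apply sin_increasing_1; lra).
  assert (Hsu0 : 0 < sin u) by (apply sin_gt_0; lra).
  assert (Hcu : cos x < cos u) by (apply cos_decreasing_1; lra).
  assert (HS3 : 0 <= sin ((INR m + 3) * x)) by (apply sin_ge_0; nra).
  assert (HC3 : cos ((INR m + 3) * x) <= 0) by (apply cos_le_0; nra).
  assert (Hsx : sin x <= x) by (apply sin_le_id; lra).
  assert (Hsx0 : 0 < sin x) by (apply sin_gt_0; lra).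
  assert (Hmsx : (INR m + 4) * sin x <= 4) by nra.
  assert (Hcc := cos_sq_ge x (conj (Rlt_le _ _ Hx0) (Rlt_le _ _ Hx4))).
  assert (Hc : 0 < cos x) by (apply cos_gt_0; lra).
  assert (Hpy := sin2_cos2 x). unfold Rsqr in Hpy.
  unfold dPP. cbv zeta.
  set (r := / (2 * cos x)).
  assert (Hr : 0 < r) by (unfold r; apply Rinv_0_lt_compat; lra).
  assert (Hrc : r * cos x = 1 / 2) by (unfold r; field; lra).
  assert (Hr2 : r * r <= 1 / 2) by nra.
  assert (Hr1 : r <= 1) by nra.
  rewrite !pow_add.
  assert (Hq := pow_le1 r m (conj (Rlt_le _ _ Hr) Hr1)).
  assert (Hq0 : 0 < r ^ m) by (apply pow_lt; lra).
  set (q := r ^ m) in *.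
  rewrite HSK, HCK.
  set (sx := sin x) in *. set (cx := cos x) in *. set (su := sin u) in *. set (cu := cos u) in *.
  set (S3 := sin ((INR m + 3) * x)) in *. set (C3 := cos ((INR m + 3) * x)) in *.
  assert (Hr4 : r ^ 4 <= 1 / 4) by (simpl; nra).
  assert (Hr5 : 0 <= r ^ 5) by (apply pow_le; lra).
  assert (Hr71 : r <= 71 / 100) by nra.
  assert (Hs71 : sx <= 71 / 100) by nra.
  assert (Hc7 : 7 / 10 <= cx) by nra.
  assert (F1 : r ^ 5 <= 71 / 400) by (replace (r ^ 5) with (r ^ 4 * r) by ring; nra).
  assert (B1 : -4 * r ^ 3 * (2 * r ^ 2 * sx) * - su <= 8 * r ^ 5 * sx * sx).
  { replace (-4 * r ^ 3 * (2 * r ^ 2 * sx) * - su) with (8 * r ^ 5 * sx * su) by ring.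
    apply Rmult_le_compat_l; [|lra]. apply Rmult_le_pos; [lra|]. lra. }
  assert (B2 : (1 - r ^ 4) * (INR m + 5) * - cu <= - ((1 - r ^ 4) * 5 * cx)).
  { assert (5 * cx <= (INR m + 5) * cu) by nra.
    assert (0 < 1 - r ^ 4) by lra. nra. }
  assert (B3 : 0 <= (2 * r * (2 * r ^ 2 * sx) + 4 * r ^ 3 * (2 * r ^ 2 * sx)) * S3).
  { apply Rmult_le_pos; [|lra]. assert (0 <= r ^ 2) by (apply pow_le; lra).
    assert (0 <= r ^ 3) by (apply pow_le; lra). nra. }
  assert (B4 : (1 - r ^ 2 - r ^ 4) * (INR m + 3) * C3 <= 0).
  { assert (0 <= 1 - r ^ 2 - r ^ 4) by (simpl; nra).
    assert (0 <= (1 - r ^ 2 - r ^ 4) * (INR m + 3)) by (apply Rmult_le_pos; lra). nra. }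
  assert (B5 : (INR m + 4) * (r ^ 3 * q) * (2 * r ^ 2 * sx) * sx <= 8 * r ^ 5 * sx).
  { replace ((INR m + 4) * (r ^ 3 * q) * (2 * r ^ 2 * sx) * sx)
      with (2 * r ^ 5 * sx * (q * ((INR m + 4) * sx))) by ring.
    replace (8 * r ^ 5 * sx) with (2 * r ^ 5 * sx * 4) by ring.
    apply Rmult_le_compat_l; [apply Rmult_le_pos; [lra|]; lra|].
    assert (0 <= (INR m + 4) * sx) by nra. nra. }
  assert (B6 : r ^ 4 * q * cx <= r ^ 4 * cx).
  { assert (0 <= r ^ 4 * cx) by (apply Rmult_le_pos; [apply pow_le|]; lra).
    replace (r ^ 4 * q * cx) with ((r ^ 4 * cx) * q) by ring.
    replace (r ^ 4 * cx) with ((r ^ 4 * cx) * 1) at 2 by ring. apply Rmult_le_compat_l; lra. }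
  assert (F2 : 8 * r ^ 5 * sx * sx <= 8 * (71 / 400) * (1 / 2)).
  { assert (sx * sx <= 1/2) by lra. assert (0 <= sx * sx) by nra. nra. }
  assert (F3 : 8 * r ^ 5 * sx <= 8 * (71 / 400) * (71 / 100)) by nra.
  assert (F4 : r ^ 4 * cx - (1 - r ^ 4) * 5 * cx <= - (7 / 2) * (7 / 10)) by nra.
  lra.
Qed.

Lemma Phi_PP (m : nat) (x : R) : 0 < cos x -> Phi (5 + m) x = / (2 * cos x) * PP m x.
Proof.
  intros Hc. unfold Phi. cbv zeta. rewrite Cmod_a by lra. unfold PP.
  rewrite plus_INR. replace (INR 5) with 5 by (simpl; ring).
  replace ((5 + INR m - 1) * x) with ((INR m + 4) * x) by ring.
  replace ((5 + INR m - 2) * x) with ((INR m + 4) * x - x) by ring.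
  replace ((INR m + 5) * x) with ((INR m + 4) * x + x) by ring.
  replace ((INR m + 3) * x) with ((INR m + 4) * x - x) by ring.
  rewrite sin_plus, !sin_minus, !pow_add.
  set (q := (/ (2 * cos x)) ^ m). field. lra.
Qed.

Lemma Phi4_eq (x : R) : 0 < cos x ->
  Phi 4 x = sin x * (1 - (/ (2 * cos x)) ^ 2) * (1 - 2 * (/ (2 * cos x)) ^ 4) / (/ (2 * cos x)) ^ 2.
Proof.
  intros Hc. unfold Phi. cbv zeta. rewrite Cmod_a by lra.
  replace (INR 4 - 1) with 3 by (simpl; ring).
  replace (INR 4 - 2) with 2 by (simpl; ring).
  replace (3 * x) with (2 * x + x) by ring.
  rewrite sin_plus, sin_2a, cos_2a_cos. field. lra.
Qed.

Lemma Phi_pos (n : nat) (ek ek1 x : R) :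
  is_eta_k (4 + n) ek -> is_eta_k (5 + n) ek1 -> ek1 <= x < ek -> 0 < Phi (4 + n) x.
Proof.
  intros [[He1 He2] He3] [[Hf1 Hf2] Hf3] Hx.
  pose proof PI_RGT_0 as Hpi.
  rewrite plus_INR in He1, He2, Hf1. replace (INR 4) with 4 in * by (simpl; ring).
  replace (INR 5) with 5 in * by (simpl; ring). pose proof (pos_INR n) as Hn.
  assert (Hx0 : 0 < x).
  { apply Rlt_le_trans with ek1; [|lra]. apply Rlt_trans with (PI / (5 + INR n)); [|lra].
    apply Rdiv_lt_0_compat; lra. }
  destruct n as [|m].
  - simpl in He1, He2. replace (4 + 0) with 4 in * by ring. replace (4 + 0 - 1) with 3 in * by ring.
    simpl (4 + 0)%nat in *.
    assert (Hce : 1 / 2 < cos ek) by (rewrite <- cos_PI3; apply cos_decreasing_1; lra).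
    assert (Hcx : cos ek < cos x) by (apply cos_decreasing_1; lra).
    rewrite Phi4_eq in He3 by lra. rewrite Phi4_eq by lra.
    set (re := / (2 * cos ek)) in *. set (rx := / (2 * cos x)).
    assert (Hre : 0 < re < 1).
    { unfold re. split; [apply Rinv_0_lt_compat; lra|].
      apply Rmult_lt_reg_r with (2 * cos ek); [lra|]. rewrite Rinv_l by lra. lra. }
    assert (Hrx : 0 < rx < re).
    { unfold rx, re. split; [apply Rinv_0_lt_compat; lra|]. apply Rinv_lt_contravar; nra. }
    assert (Hse : 0 < sin ek) by (apply sin_gt_0; lra).
    assert (Hsx : 0 < sin x) by (apply sin_gt_0; lra).
    assert (H2 : 1 - 2 * re ^ 4 = 0).
    { unfold Rdiv in He3. 
      assert (0 < re ^ 2) by (apply pow_lt; lra).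
      assert (0 < 1 - re ^ 2) by (simpl; nra).
      apply Rmult_integral in He3. destruct He3 as [He3|He3].
      - apply Rmult_integral in He3. destruct He3 as [He3|He3]; [|lra].
        apply Rmult_integral in He3. destruct He3 as [He3|He3]; lra.
      - exfalso. apply (Rinv_neq_0_compat (re ^ 2)); lra. }
    assert (Hr4 : rx ^ 4 < re ^ 4) by (simpl; assert (rx * rx < re * re) by nra; nra).
    assert (0 < rx ^ 2) by (apply pow_lt; lra).
    assert (0 < 1 - rx ^ 2) by (simpl; nra).
    apply Rdiv_lt_0_compat; [|lra].
    apply Rmult_lt_0_compat; [|lra]. apply Rmult_lt_0_compat; lra.
  - change (4 + S m)%nat with (5 + m)%nat in *.
    rewrite S_INR in *.
    assert (HM : 0 < INR m + 4) by lra.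
    destruct (Rle_or_lt x (PI / (INR m + 5))) as [Hle|Hlt].
    + rewrite Phi_PP.
      2: { apply cos_gt_0; [lra|]. apply Rle_lt_trans with (PI / (INR m + 5)); [exact Hle|].
           unfold Rdiv. apply Rmult_lt_compat_l; [lra|]. apply Rinv_lt_contravar; nra. }
      apply Rmult_lt_0_compat.
      * apply Rinv_0_lt_compat. apply Rmult_lt_0_compat; [lra|]. apply cos_gt_0; [lra|].
        apply Rle_lt_trans with (PI / (INR m + 5)); [exact Hle|].
        unfold Rdiv. apply Rmult_lt_compat_l; [lra|]. apply Rinv_lt_contravar; nra.
      * apply PP_pos_left; lra.
    + assert (Hb : PI / (INR m + 4) <= PI / 2).
      { unfold Rdiv. apply Rmult_le_compat_l; [lra|]. apply Rinv_le_contravar; lra. }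
      replace (4 + (INR m + 1) - 1) with (INR m + 4) in He2 by ring.
      replace (4 + (INR m + 1)) with (INR m + 5) in He1 by ring.
      assert (Hce : 0 < cos ek) by (apply cos_gt_0; lra).
      assert (Hcx : 0 < cos x) by (apply cos_gt_0; lra).
      rewrite Phi_PP in He3 |- * by lra.
      assert (HPe : PP m ek = 0).
      { apply Rmult_integral in He3. destruct He3 as [He3|He3]; [|exact He3].
        exfalso. apply (Rinv_neq_0_compat (2 * cos ek)); lra. }
      assert (Hinc : - PP m x < - PP m ek).
      { apply (incr_function (fun y => - PP m y) (PI / (INR m + 5)) (PI / (INR m + 4))
                 (fun y => - dPP m y)).
        - intros y Hy1 Hy2. simpl in Hy1, Hy2.
          assert (Hd : is_derive (PP m) y (dPP m y)).
          { apply PP_deriv. apply cos_gt_0; [|lra].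
            assert (0 < PI / (INR m + 5)) by (apply Rdiv_lt_0_compat; lra). lra. }
          exact (is_derive_opp (PP m) y (dPP m y) Hd).
        - intros y Hy1 Hy2. simpl in Hy1, Hy2. pose proof (dPP_neg m y Hy1 Hy2). lra.
        - simpl. exact Hlt.
        - lra.
        - simpl. exact He2. }
      apply Rmult_lt_0_compat; [apply Rinv_0_lt_compat; lra|]. lra.
Qed.

Lemma A_pos (n : nat) (x : R) : 0 < x -> x < PI / (INR (4 + n) - 1) ->
  0 < sin x + (/ (2 * cos x)) ^ (2 + n) * sin (INR (5 + n) * x).
Proof.
  intros Hx0 Hx1. pose proof PI_RGT_0 as Hpi. pose proof PI_4 as Hpi4.
  rewrite plus_INR in Hx1. replace (INR 4) with 4 in Hx1 by (simpl; ring).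
  assert (Hsx : 0 < sin x).
  { apply sin_gt_0; [lra|]. apply Rlt_le_trans with (PI / (4 + INR n - 1)); [lra|].
    pose proof (pos_INR n). unfold Rdiv. rewrite <- (Rmult_1_r PI) at 2.
    apply Rmult_le_compat_l; [lra|]. rewrite <- Rinv_1. apply Rinv_le_contravar; lra. }
  destruct n as [|m].
  - simpl (4 + INR 0 - 1) in Hx1. replace (4 + 0 - 1) with 3 in Hx1 by ring.
    assert (Hc : 1 / 2 < cos x) by (rewrite <- cos_PI3; apply cos_decreasing_1; lra).
    replace (INR (5 + 0)) with 5 by (simpl; ring).
    replace (5 * x) with (2 * (2 * x) + x) by ring.
    rewrite sin_plus, !sin_2a, !cos_2a_cos.
    set (c := cos x) in *. set (s := sin x) in *.
    change (2 + 0)%nat with 2%nat.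
    match goal with |- 0 < ?G =>
      replace G with (s * ((4 * c * c - 1) * (4 * c * c - 1)) / (4 * c * c)) by (field; repeat split; lra) end.
    assert (0 < 4 * c * c - 1) by nra.
    apply Rdiv_lt_0_compat; [|nra]. apply Rmult_lt_0_compat; [lra|]. apply Rmult_lt_0_compat; lra.
  - rewrite S_INR in Hx1. pose proof (pos_INR m) as Hm.
    assert (HK2 : (INR m + 4) * x < PI).
    { apply Rmult_lt_reg_r with (/ (INR m + 4)); [apply Rinv_0_lt_compat; lra|].
      replace ((INR m + 4) * x * / (INR m + 4)) with x by (field; lra).
      replace (4 + (INR m + 1) - 1) with (INR m + 4) in Hx1 by ring. exact Hx1. }
    assert (Hx4 : x < PI / 4) by nra.
    assert (Hcc := cos_sq_ge x (conj (Rlt_le _ _ Hx0) (Rlt_le _ _ Hx4))).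
    assert (Hc : 0 < cos x) by (apply cos_gt_0; lra).
    set (r := / (2 * cos x)).
    assert (Hr : 0 < r) by (unfold r; apply Rinv_0_lt_compat; lra).
    assert (Hrc : r * cos x = 1 / 2) by (unfold r; field; lra).
    assert (Hr2 : r * r <= 1 / 2) by nra.
    assert (Hr1 : r <= 1) by nra.
    assert (Hq := pow_le1 r m (conj (Rlt_le _ _ Hr) Hr1)).
    assert (Hq0 : 0 < r ^ m) by (apply pow_lt; lra).
    replace (2 + S m)%nat with (3 + m)%nat by lia. rewrite pow_add.
    replace (INR (5 + S m)) with (INR m + 6).
    2: { rewrite plus_INR. replace (INR 5) with 5 by (simpl; ring). rewrite S_INR. ring. }
    assert (Hr3 : r ^ 3 <= 1 / 2) by (simpl; nra).
    assert (Hr30 : 0 < r ^ 3) by (apply pow_lt; lra).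
    destruct (Rle_or_lt ((INR m + 6) * x) PI) as [Hle|Hlt].
    + assert (0 <= sin ((INR m + 6) * x)) by (apply sin_ge_0; nra).
      assert (0 <= r ^ 3 * r ^ m) by nra. nra.
    + set (u := (INR m + 6) * x - PI).
      assert (Hu : 0 < u < 2 * x) by (unfold u; nra).
      replace ((INR m + 6) * x) with (u + PI) by (unfold u; ring). rewrite neg_sin.
      replace u with (2 * (u / 2)) by field. rewrite sin_2a.
      assert (Hsu : sin (u / 2) < sin x) by (apply sin_increasing_1; lra).
      assert (Hsu0 : 0 < sin (u / 2)) by (apply sin_gt_0; lra).
      assert (Hcu : cos (u / 2) <= 1) by apply COS_bound.
      assert (Hcu0 : 0 < cos (u / 2)) by (apply cos_gt_0; lra).
      assert (0 <= r ^ 3 * r ^ m <= 1 / 2) by (split; nra).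
      assert (2 * sin (u / 2) * cos (u / 2) <= 2 * sin (u / 2)) by nra.
      assert (0 <= 2 * sin (u / 2) * cos (u / 2)) by nra.
      nra.
Qed.

Theorem lemma6p2 (k : nat) (ek ek1 eta : R) :
  (4 <= k)%nat ->
  is_eta_k k ek ->
  is_eta_k (S k) ek1 ->
  ek1 <= eta < ek ->
  (0 < angle (z_ eta (k - 1)) (z_ eta k) (w_ eta 1) < PI) /\
  (0 < angle (z_ eta k) (w_ eta 1) (w_ eta 2) < PI) /\
  (0 < angle (w_ eta (k - 1)) (w_ eta k) (b0 eta) < PI) /\
  (0 < angle (w_ eta k) (b0 eta) (z_ eta 0) < PI).
Proof.
  intros Hk Hek Hek1 Hx.
  destruct (Nat.le_exists_sub 4 k Hk) as [n [Hn _]].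
  rewrite Nat.add_comm in Hn. subst k.
  assert (HPhi : 0 < Phi (4 + n) eta) by (eapply Phi_pos; eauto).
  assert (Hn4 : INR (4 + n) = INR n + 4) by (rewrite plus_INR; simpl; ring).
  assert (Hn5 : INR (5 + n) = INR n + 5) by (rewrite plus_INR; simpl; ring).
  assert (Hpos : 0 < eta /\ eta < PI / 3).
  { destruct Hek as [[H1 H2] _]. destruct Hek1 as [[H3 H4] _].
    rewrite Hn4 in H2. replace (S (4 + n)) with (5 + n)%nat in H3 by lia.
    rewrite Hn5 in H3. pose proof (pos_INR n). pose proof PI_RGT_0.
    split.
    - apply Rlt_le_trans with ek1; [|lra]. apply Rlt_trans with (PI / (INR n + 5)); [|lra].
      apply Rdiv_lt_0_compat; lra.
    - apply Rlt_le_trans with ek; [lra|]. left. apply Rlt_le_trans with (PI / (INR n + 4 - 1)); [lra|].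
      unfold Rdiv. apply Rmult_le_compat_l; [lra|]. apply Rinv_le_contravar; lra. }
  assert (HA : 0 < sin eta + (/ (2 * cos eta)) ^ (2 + n) * sin (INR (5 + n) * eta)).
  { apply A_pos; [lra|]. destruct Hek as [[_ H2] _]. lra. }
  assert (Hcos : 1/2 < cos eta).
  { rewrite <- cos_PI3. apply cos_decreasing_1; pose proof PI_RGT_0; lra. }
  assert (Hcos1 : cos eta < 1).
  { rewrite <- cos_0. apply cos_decreasing_1; pose proof PI_RGT_0; lra. }
  set (r := / (2 * cos eta)) in *.
  assert (Hr1 : 1/2 < r < 1).
  { unfold r. split.
    - apply Rmult_lt_reg_r with (2 * cos eta); [lra|]. rewrite Rinv_l by lra; lra.
    - apply Rmult_lt_reg_r with (2 * cos eta); [lra|]. rewrite Rinv_l by lra; lra. }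
  assert (Hc0 : 0 < cos eta) by lra.
  assert (Hcm : Cmod (a_ eta) = r) by (apply Cmod_a; lra).
  assert (Hs : RtoC (r ^ 2) = (a_ eta * (1 - a_ eta))%C) by (symmetry; apply ab_eq; lra).
  assert (Hcj : Cconj (a_ eta) = (1 - a_ eta)%C) by (apply conj_a; lra).
  assert (Hc : c_ eta = 1 / (1 - r ^ 4)) by (unfold c_; rewrite Hcm; reflexivity).
  assert (Hcpos : 0 < c_ eta).
  { rewrite Hc. apply Rdiv_lt_0_compat; [lra|].
    assert (r ^ 4 < 1) by (refine (proj2 (pow_lt_1_compat r 4 _ _)); [lra|lia]). lra. }
  assert (H4 : Cmod (a_ eta) ^ 4 = (r ^ 2) ^ 2) by (rewrite Hcm; ring).
  assert (H2 : Cmod (a_ eta) ^ 2 = r ^ 2) by (rewrite Hcm; ring).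
  unfold z_, w_, b0. rewrite H4, H2.
  set (c := c_ eta) in *. set (a := a_ eta) in *.
  assert (Hc1 : RtoC c = (RtoC (c * (r ^ 2) ^ 2) + 1)%C).
  { rewrite <- RtoC_plus. f_equal. rewrite Hc. field. assert (r ^ 4 < 1) by (refine (proj2 (pow_lt_1_compat r 4 _ _)); [lra|lia]). lra. }
  replace (4 + n - 1 + 1)%nat with (4 + n)%nat by lia.
  replace (4 + n + 1)%nat with (5 + n)%nat by lia.
  replace (4 + n - 1)%nat with (3 + n)%nat by lia.
  replace (0 + 1)%nat with 1%nat by lia.
  assert (Hr0 : 0 < r) by lra.
  assert (Hrc : 2 * r * cos eta = 1) by (unfold r; field; lra).
  assert (Hr4 : 1 - r ^ 4 <> 0).
  { assert (r ^ 4 < 1) by (refine (proj2 (pow_lt_1_compat r 4 _ _)); [lra|lia]). lra. }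
  assert (Hsin2 : sin (INR 2 * eta) = sin eta / r).
  { replace (INR 2 * eta) with (2 * eta) by (simpl; ring). rewrite sin_2a.
    unfold r. field. lra. }
  assert (Hsin1 : sin (INR 1 * eta) = sin eta) by (f_equal; simpl; ring).
  assert (HI3 : INR (3 + n) = INR n + 3) by (rewrite plus_INR; simpl; ring).
  assert (HI2 : INR (2 + n) = INR n + 2) by (rewrite plus_INR; simpl; ring).
  set (p := r ^ n).
  assert (Hp : 0 < p) by (apply pow_lt; lra).
  assert (Hpp : (r ^ 2) ^ n = p ^ 2) by (unfold p; rewrite <- !pow_mult, Nat.mul_comm; reflexivity).
  assert (Hr3 : r ^ (3 + n) = r ^ 3 * p) by (unfold p; apply pow_add).
  assert (Hr2 : r ^ (2 + n) = r ^ 2 * p) by (unfold p; apply pow_add).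
  assert (Hr5 : r ^ (5 + n) = r ^ 5 * p) by (unfold p; apply pow_add).
  unfold Phi in HPhi. cbv zeta in HPhi. fold a in HPhi. rewrite Hcm, Hn4 in HPhi.
  replace ((INR n + 4 - 1) * eta) with (INR (3 + n) * eta) in HPhi by (rewrite HI3; ring).
  replace ((INR n + 4 - 2) * eta) with (INR (2 + n) * eta) in HPhi by (rewrite HI2; ring).
  replace (r ^ (4 + n)) with (r ^ 4 * p) in HPhi by (unfold p; rewrite pow_add; ring).
  set (S3 := sin (INR (3 + n) * eta)) in *.
  set (S2 := sin (INR (2 + n) * eta)) in *.
  rewrite Hr2 in HA.
  set (S5 := sin (INR (5 + n) * eta)) in *.
  assert (Hsx : 0 < sin eta) by (apply sin_gt_0; pose proof PI_RGT_0; lra).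
  split; [|split; [|split]]; apply angle_pos.
  all: rewrite ?Cminus_conj, ?Cplus_conj, ?Cmult_conj, ?Cpow_conj, ?Cconj_RtoC, ?Cconj_1, ?Hcj.
  - rewrite (id1 a c (r ^ 2) n Hs).
    rewrite !Im_minus, !Im_RtoC_mult. unfold a. rewrite !Im_pow_b, !Im_pow_a by lra. fold r.
    fold S3 S2. rewrite Hsin2, Hpp, Hr3, Hr2.
    match goal with |- 0 < ?E => replace E with (c ^ 2 * r ^ 5 * p * ((1 - r ^ 4) * S3 - r ^ 3 * S2 + r ^ 4 * p * sin eta) * (r^2) ^ 0) end.
    2: { rewrite Hc. field; lra. }
    apply Rmult_lt_0_compat; [|apply pow_lt; nra]. apply Rmult_lt_0_compat; [|exact HPhi].
    apply Rmult_lt_0_compat; [|exact Hp]. apply Rmult_lt_0_compat; [apply pow_lt; lra|apply pow_lt; lra].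
  - rewrite (id2 a c (r ^ 2) n Hs).
    rewrite !Im_plus, !Im_minus, !Im_RtoC_mult, Im_RtoC. unfold a. rewrite !Im_pow_b by lra. fold r.
    fold S5. rewrite Hsin1, Hr5.
    match goal with |- 0 < ?E => replace E with (c ^ 2 * r ^ 7 * (sin eta + r ^ 2 * p * S5)) end.
    2: { field; lra. }
    apply Rmult_lt_0_compat; [|exact HA]. apply Rmult_lt_0_compat; apply pow_lt; lra.
  - rewrite (id3 a c (r ^ 2) n Hs).
    rewrite !Im_minus, !Im_RtoC_mult. unfold a. rewrite !Im_pow_b, !Im_pow_a by lra. fold r.
    fold S3 S2. rewrite Hsin2, Hpp, Hr3, Hr2.
    match goal with |- 0 < ?E => replace E with (c ^ 2 * r ^ 5 * p * ((1 - r ^ 4) * S3 - r ^ 3 * S2 + r ^ 4 * p * sin eta) * (r^2) ^ 1) end.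
    2: { rewrite Hc. field; lra. }
    apply Rmult_lt_0_compat; [|apply pow_lt; nra]. apply Rmult_lt_0_compat; [|exact HPhi].
    apply Rmult_lt_0_compat; [|exact Hp]. apply Rmult_lt_0_compat; [apply pow_lt; lra|apply pow_lt; lra].
  - rewrite Hc1. rewrite (id4 a c (r ^ 2) n Hs).
    rewrite !Im_plus, Im_opp, !Im_RtoC_mult, Im_RtoC. unfold a. rewrite !Im_pow_b by lra. fold r.
    fold S5. rewrite Hsin1, Hr5.
    match goal with |- 0 < ?E => replace E with (c ^ 2 * r ^ 9 * (sin eta + r ^ 2 * p * S5)) end.
    2: { field; lra. }
    apply Rmult_lt_0_compat; [|exact HA]. apply Rmult_lt_0_compat; apply pow_lt; lra.
Qed.
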